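(* Let $a>0$, $B_u>0$, $B_v\neq0$, $\Delta x\in(0,1]$, $\varepsilon>0$, let $(\alpha,\beta)$ be a SAT-parameter (defined in the context), and assume $2aB_v+\tfrac{\Delta x}{\varepsilon}B_u>0$. Consider the inequality $$\sqrt{2a|B_v\alpha|}<\sqrt{-\bigl(2aB_v+\tfrac{\Delta x}{\varepsilon}B_u\bigr)\alpha}.\qquad(\ast)$$ (a) If $B_v>0$, then $(\ast)$ holds (for all such $\Delta x,\varepsilon$). (b) If $B_v<0$, then for any $\delta_0>-4aB_u^{-1}B_v$, $(\ast)$ holds whenever $\Delta x\geq\delta_0\varepsilon$.
   Context: SAT-parameter: given $a>0$, $B_u>0$, $B_v\neq 0$, a pair $(\alpha,\beta)\in\mathbb{R}^2$ is a SAT-parameter if $\alpha<(3+2\sqrt2)\min(B_v^{-1},0)$ and $-a(1-B_v\alpha)-2a\sqrt{|B_v\alpha|}<\beta B_u<-a(1-B_v\alpha)+2a\sqrt{|B_v\alpha|}$. *)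

(* Defs.v *)
From Stdlib Require Import Reals Lra.
Open Scope R_scope.

Definition SAT_parameter (a Bu Bv alpha beta : R) : Prop :=
  alpha < (3 + 2 * sqrt 2) * Rmin (/ Bv) 0 /\
  - a * (1 - Bv * alpha) - 2 * a * sqrt (Rabs (Bv * alpha)) < beta * Bu /\
  beta * Bu < - a * (1 - Bv * alpha) + 2 * a * sqrt (Rabs (Bv * alpha)).

Definition ineq_star (a Bu Bv dx eps alpha : R) : Prop :=
  sqrt (2 * a * Rabs (Bv * alpha)) < sqrt (- (2 * a * Bv + dx / eps * Bu) * alpha).

(* Main.v *)
Require Import Defs.
From Stdlib Require Import Reals Lra Psatz.
Open Scope R_scope.

Theorem lemma3 (a Bu Bv dx eps alpha beta : R) :
  0 < a -> 0 < Bu -> Bv <> 0 -> 0 < dx <= 1 -> 0 < eps ->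
  SAT_parameter a Bu Bv alpha beta ->
  0 < 2 * a * Bv + dx / eps * Bu ->
  (0 < Bv -> ineq_star a Bu Bv dx eps alpha) /\
  (Bv < 0 -> forall delta0 : R, - 4 * a * / Bu * Bv < delta0 ->
     delta0 * eps <= dx -> ineq_star a Bu Bv dx eps alpha).
Proof.
  intros ha hu hv hdx he [hs _] hpos.
  assert (hsq : 0 <= sqrt 2) by apply sqrt_pos.
  assert (hmin : Rmin (/ Bv) 0 <= 0) by apply Rmin_r.
  assert (hal : alpha < 0).
  { assert ((3 + 2 * sqrt 2) * Rmin (/ Bv) 0 <= 0) by nra. lra. }
  assert (hk : 0 < dx / eps) by (apply Rdiv_lt_0_compat; lra).
  set (k := dx / eps) in *.
  split.
  - intros hb. unfold ineq_star. fold k.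
    assert (0 < Bv * -alpha) by nra.
    rewrite Rabs_left by nra.
    assert (0 < k * Bu * - alpha) by (apply Rmult_lt_0_compat; nra).
    apply sqrt_lt_1; nra.
  - intros hb d0 hd0 hde. unfold ineq_star. fold k.
    assert (hkd : d0 <= k).
    { unfold k. apply (Rmult_le_reg_r eps); auto.
      unfold Rdiv. rewrite Rmult_assoc, Rinv_l by lra. lra. }
    assert (hkb : - 4 * a * Bv < k * Bu).
    { assert (- 4 * a * / Bu * Bv * Bu = - 4 * a * Bv) by (field; lra).
      nra. }
    assert (0 < Bv * alpha) by nra.
    rewrite Rabs_right by nra.
    assert (0 < (k * Bu + 4 * a * Bv) * - alpha) by (apply Rmult_lt_0_compat; nra).
    apply sqrt_lt_1; nra.
Qed.
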